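(* Let $S$ be a rectangular band semigroup and let $\omega$ be a separable weight on $S$. Then $\ell^{1}(S,\omega)$ is pseudo-amenable if and only if $S$ is a singleton.
   Context: A rectangular band semigroup is a semigroup $S$ with $s^2=s$ and $sts=s$ for all $s,t\in S$; every such $S$ is isomorphic to $L\times R$ where $L$ is a left zero semigroup ($st=s$ for all $s,t$) and $R$ is a right zero semigroup ($st=t$ for all $s,t$). A weight on a semigroup is a function $\omega$ into $(0,\infty)$ with $\omega(st)\le\omega(s)\omega(t)$; a weight $\omega$ on $S\cong L\times R$ is separable if there are weights $\omega_L$ on $L$ and $\omega_R$ on $R$ with $\omega(l,r)=\omega_L(l)\omega_R(r)$. The Beurling algebra $\ell^{1}(S,\omega)$ is the space of $f=\sum_s f(s)\delta_s$ with $\sum_s|f(s)|\omega(s)<\infty$, with convolution $\delta_s*\delta_t=\delta_{st}$. For a Banach algebra $\mathcal{A}$, let $\pi:\mathcal{A}\hat{\otimes}\mathcal{A}\to\mathcal{A}$, $\pi(a\otimes b)=ab$, with the bimodule structure $c\cdot(a\otimes b)=ca\otimes b$, $(a\otimes b)\cdot c=a\otimes bc$. An approximate diagonal is a net $(m_i)$ in $\mathcal{A}\hat{\otimes}\mathcal{A}$ with $a\cdot m_i-m_i\cdot a\to0$ and $a\pi(m_i)\to a$ for all $a\in\mathcal{A}$; $\mathcal{A}$ is pseudo-amenable if it has an approximate diagonal. *)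

(* Defs.v *)
From HB Require Import structures.
From mathcomp Require Import all_boot all_order all_algebra.
From mathcomp Require Import all_classical all_reals.
From mathcomp Require Import ereal esum.
From mathcomp Require Import complex.

Set Implicit Arguments.
Unset Strict Implicit.
Unset Printing Implicit Defensive.

Import Order.TTheory GRing.Theory Num.Theory.
Local Open Scope classical_set_scope.
Local Open Scope ring_scope.

Section Beurling.
Variable R : realType.

Definition cmod (z : R[i]) : R := ComplexField.Normc.normc z.

Definition rsum (T : choiceType) (A : set T) (g : T -> R) : R :=
  fine (\esum_(x in A) (Num.max (g x) 0)%:E)%E
  - fine (\esum_(x in A) (Num.max (- g x) 0)%:E)%E.

Definition csum (T : choiceType) (A : set T) (f : T -> R[i]) : R[i] :=
  Complex (rsum A (fun x => let: Complex a _ := f x in a)) (rsum A (fun x => let: Complex _ b := f x in b)).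

Definition wnorm (T : choiceType) (w : T -> R) (f : T -> R[i]) : \bar R :=
  (\esum_(x in [set: T]) (cmod (f x) * w x)%:E)%E.

Definition inl1 (T : choiceType) (w : T -> R) (f : T -> R[i]) : Prop :=
  (wnorm w f < +oo)%E.

Variable S : choiceType.
Variable mul : S -> S -> S.

Definition conv (f g : S -> R[i]) (u : S) : R[i] :=
  csum [set p : S * S | mul p.1 p.2 = u] (fun p => f p.1 * g p.2).

(* the weight on S x S realizing  l^1(S,w) \hat\otimes l^1(S,w) = l^1(S x S, w x w) *)
Definition tweight (w : S -> R) (p : S * S) : R := w p.1 * w p.2.

(* bimodule actions on l^1(S x S):  c.(a (x) b) = ca (x) b,  (a (x) b).c = a (x) bc *)
Definition lact (a : S -> R[i]) (m : S * S -> R[i]) (q : S * S) : R[i] :=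
  csum [set p : S * S | mul p.1 p.2 = q.1] (fun p => a p.1 * m (p.2, q.2)).

Definition ract (m : S * S -> R[i]) (a : S -> R[i]) (q : S * S) : R[i] :=
  csum [set p : S * S | mul p.1 p.2 = q.2] (fun p => m (q.1, p.1) * a p.2).

(* the product map  pi(a (x) b) = ab *)
Definition piS (m : S * S -> R[i]) (u : S) : R[i] :=
  csum [set p : S * S | mul p.1 p.2 = u] m.

End Beurling.

Definition directed (I : Type) (le : I -> I -> Prop) : Prop :=
  inhabited I /\ (forall i, le i i) /\ (forall i j k, le i j -> le j k -> le i k)
  /\ (forall i j, exists k, le i k /\ le j k).

Definition net_to0 (R : realType) (I : Type) (le : I -> I -> Prop)
  (x : I -> \bar R) : Prop :=
  forall e : R, 0 < e -> exists i0 : I, forall i, le i0 i -> (x i < e%:E)%E.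

Definition rectangular_band (S : Type) (mul : S -> S -> S) : Prop :=
  (forall s t u, mul s (mul t u) = mul (mul s t) u) /\
  (forall s, mul s s = s) /\ (forall s t, mul (mul s t) s = s).

Definition is_weight (R : realType) (S : Type) (mul : S -> S -> S) (w : S -> R) : Prop :=
  (forall s, 0 < w s) /\ (forall s t, w (mul s t) <= w s * w t).

(* S = L x R (left zero x right zero) and w(l,r) = wL(l) wR(r) *)
Definition separable_weight (R : realType) (S : Type) (mul : S -> S -> S) (w : S -> R) : Prop :=
  exists (L Rt : Type) (phi : L * Rt -> S),
    bijective phi /\
    (forall l r l' r', mul (phi (l, r)) (phi (l', r')) = phi (l, r')) /\
    exists (wL : L -> R) (wR : Rt -> R),
      is_weight (fun l _ : L => l) wL /\ is_weight (fun _ r : Rt => r) wR /\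
      (forall l r, w (phi (l, r)) = wL l * wR r).

(* l^1(S,w) is pseudo-amenable: it has an approximate diagonal *)
Definition pseudo_amenable (R : realType) (S : choiceType) (mul : S -> S -> S) (w : S -> R) : Prop :=
  exists (I : Type) (le : I -> I -> Prop) (m : I -> S * S -> R[i]),
    directed le /\
    (forall i, inl1 (tweight w) (m i)) /\
    (forall a : S -> R[i], inl1 w a ->
       net_to0 le (fun i => wnorm (tweight w)
                     (fun q => lact mul a (m i) q - ract mul (m i) a q)) /\
       net_to0 le (fun i => wnorm w
                     (fun u => conv mul a (piS mul (m i)) u - a u))).

(* Main.v *)
Require Import Defs.
From mathcomp Require Import all_boot all_order all_algebra.
From mathcomp Require Import all_classical all_reals.
From mathcomp Require Import ereal esum complex.
From mathcomp Require Import lra.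
Set Implicit Arguments. Unset Strict Implicit. Unset Printing Implicit Defensive.
Import Order.TTheory GRing.Theory Num.Theory.
Local Open Scope classical_set_scope.
Local Open Scope ring_scope.

Section Sums.
Variable R : realType.

Lemma mx_l (x : R) : 0 <= x -> Num.max x 0 = x.
Proof. by move=> h; apply/max_idPl. Qed.
Lemma mx_r (x : R) : x <= 0 -> Num.max x 0 = 0.
Proof. by move=> h; apply/max_idPr. Qed.
Lemma mx_ge0 (x : R) : 0 <= Num.max x 0.
Proof. by rewrite le_max lexx orbT. Qed.

Lemma posneg (g : R) : Num.max g 0 + Num.max (- g) 0 = `|g|.
Proof.
have [h|h] := leP 0 g.
  by rewrite (@mx_r (- g)) ?oppr_le0 // addr0 ger0_norm.
by rewrite (@mx_l (- g)) ?oppr_ge0 ?(ltW h) // add0r ltr0_norm.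

Qed.

Lemma fin_ex (x : \bar R) : (0 <= x)%E -> (x < +oo)%E -> exists r : R, x = r%:E /\ 0 <= r.
Proof. by case: x => // r; rewrite lee_fin => r0 _; exists r. Qed.

Lemma rsum_abs_le (T : choiceType) (A : set T) (g : T -> R) :
  (\esum_(x in A) (`|g x|)%:E < +oo)%E ->
  ((`|rsum A g|)%:E <= \esum_(x in A) (`|g x|)%:E)%E.
Proof.
move=> fin.
have PN : (\esum_(x in A) (Num.max (g x) 0)%:E + \esum_(x in A) (Num.max (- g x) 0)%:E
   = \esum_(x in A) (`|g x|)%:E)%E.
  rewrite -esumD; last 2 first.
  - by move=> x _; rewrite lee_fin le_max lexx orbT.
  - by move=> x _; rewrite lee_fin le_max lexx orbT.
  by apply: eq_esum => x _ /=; rewrite -posneg EFinD.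
have P0 : (0 <= \esum_(x in A) (Num.max (g x) 0)%:E)%E.
  by apply: esum_ge0 => x _; rewrite lee_fin le_max lexx orbT.
have N0 : (0 <= \esum_(x in A) (Num.max (- g x) 0)%:E)%E.
  by apply: esum_ge0 => x _; rewrite lee_fin le_max lexx orbT.
rewrite /rsum -PN in fin *.
move: P0 N0 fin.
case: (\esum_(x in A) (Num.max (g x) 0)%:E)%E => // p;
case: (\esum_(x in A) (Num.max (- g x) 0)%:E)%E => // n.
rewrite !lee_fin /= => p0 n0 _.

by rewrite (le_trans (ler_normB _ _)) // !ger0_norm.
Qed.


Lemma esum_sub (T : choiceType) (A B : set T) (a : T -> \bar R) :
  B `<=` A -> (forall x, 0 <= a x)%E ->
  (\esum_(x in B) a x <= \esum_(x in A) a x)%E.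
Proof.
move=> BA a0; rewrite (esum_mkcond B) (esum_mkcond A); apply: le_esum => x _.
case: ifPn => xB; first by rewrite ifT // inE; apply: BA; rewrite -inE.
by case: ifP.
Qed.

Lemma rsum_agree (T : choiceType) (A B : set T) (g : T -> R) :
  (forall x, g x != 0 -> (A x <-> B x)) -> rsum A g = rsum B g.
Proof.
move=> h; rewrite /rsum (esum_mkcond A) (esum_mkcond B).
rewrite (esum_mkcond A (fun x => (Num.max (- g x) 0)%:E)).
rewrite (esum_mkcond B (fun x => (Num.max (- g x) 0)%:E)).
congr (fine _ - fine _); apply: eq_esum => x _.
- have [->|gx] := eqVneq (g x) 0; first by rewrite (@mx_r 0) //; case: ifP; case: ifP.
  have [hA hB] := h x gx.
  by case: (boolP (x \in A)) => xA; case: (boolP (x \in B)) => xB //;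
    [move: xB; rewrite notin_setE; move: xA; rewrite inE => /hA|
     move: xA; rewrite notin_setE; move: xB; rewrite inE => /hB].
- have [->|gx] := eqVneq (g x) 0; first by rewrite oppr0 (@mx_r 0) //; case: ifP; case: ifP.
  have [hA hB] := h x gx.
  by case: (boolP (x \in A)) => xA; case: (boolP (x \in B)) => xB //;
    [move: xB; rewrite notin_setE; move: xA; rewrite inE => /hA|
     move: xA; rewrite notin_setE; move: xB; rewrite inE => /hB].
Qed.

Lemma rsum_zero (T : choiceType) (A : set T) (g : T -> R) :
  (forall x, A x -> g x = 0) -> rsum A g = 0.
Proof.
move=> h; rewrite /rsum !esum1 ?subrr // => x /h ->;
  by rewrite ?oppr0 (@mx_r 0).
Qed.

Lemma rsum_reindex (T T' : choiceType) (P : set T) (Q : set T') (e : T -> T') (g : T' -> R) :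
  set_bij P Q e -> rsum Q g = rsum P (g \o e).
Proof.
move=> h; rewrite /rsum (reindex_esum P Q e) // (reindex_esum P Q e (fun x => (Num.max (- g x) 0)%:E)) //.
Qed.

Lemma rsum_lin (T : choiceType) (A : set T) (p n : T -> R) :
  (forall x, 0 <= p x) -> (forall x, 0 <= n x) ->
  (\esum_(x in A) (p x)%:E < +oo)%E -> (\esum_(x in A) (n x)%:E < +oo)%E ->
  rsum A (fun x => p x - n x) = fine (\esum_(x in A) (p x)%:E) - fine (\esum_(x in A) (n x)%:E).
Proof.
move=> p0 n0 pf nf.
have E : (\esum_(x in A) (Num.max (p x - n x) 0)%:E + \esum_(x in A) (n x)%:E =
          \esum_(x in A) (Num.max (- (p x - n x)) 0)%:E + \esum_(x in A) (p x)%:E)%E.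
  rewrite -!esumD; try by move=> x _; rewrite lee_fin ?mx_ge0.
  apply: eq_esum => x _; rewrite -!EFinD opprB; congr (_%:E).
  have [h|h] := leP (n x) (p x).
    rewrite (@mx_l (p x - n x)) ?subr_ge0 // (@mx_r (n x - p x)) ?subr_le0 //.
    by rewrite add0r subrK.
  rewrite (@mx_r (p x - n x)) ?subr_le0 ?(ltW h) // (@mx_l (n x - p x)) ?subr_ge0 ?(ltW h) //.
  by rewrite add0r subrK.
have le1 : (\esum_(x in A) (Num.max (p x - n x) 0)%:E <= \esum_(x in A) (p x)%:E)%E.
  apply: le_esum => x _; rewrite lee_fin ge_max p0 andbT lerBlDr lerDl //.
have le2 : (\esum_(x in A) (Num.max (- (p x - n x)) 0)%:E <= \esum_(x in A) (n x)%:E)%E.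
  apply: le_esum => x _; rewrite lee_fin ge_max n0 andbT opprB lerBlDr lerDl //.
have g1 : (0 <= \esum_(x in A) (Num.max (p x - n x) 0)%:E)%E.
  by apply: esum_ge0 => x _; rewrite lee_fin mx_ge0.
have g2 : (0 <= \esum_(x in A) (Num.max (- (p x - n x)) 0)%:E)%E.
  by apply: esum_ge0 => x _; rewrite lee_fin mx_ge0.
have g3 : (0 <= \esum_(x in A) (p x)%:E)%E by apply: esum_ge0 => x _; rewrite lee_fin.
have g4 : (0 <= \esum_(x in A) (n x)%:E)%E by apply: esum_ge0 => x _; rewrite lee_fin.
rewrite /rsum.
move: E le1 le2 g1 g2 g3 g4 pf nf.
case: (\esum_(x in A) (Num.max (p x - n x) 0)%:E)%E => // a;
case: (\esum_(x in A) (Num.max (- (p x - n x)) 0)%:E)%E => // b;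
case: (\esum_(x in A) (p x)%:E)%E => // c;
case: (\esum_(x in A) (n x)%:E)%E => // d /=.
move=> /eqP; rewrite eqe => /eqP E _ _ _ _ _ _ _ _.
apply/eqP; rewrite subr_eq addrAC eq_sym subr_eq addrC E //.
Qed.

Lemma esum_part (T J : choiceType) (A : set T) (k : T -> J) (a : T -> \bar R) :
  (forall x, 0 <= a x)%E ->
  \esum_(x in A) a x = \esum_(j in [set: J]) \esum_(x in A `&` (k @^-1` [set j])) a x.
Proof.
move=> a0; rewrite (@esum_esum R J T setT (fun j => A `&` (k @^-1` [set j])) (fun j x => a x)); last by move=> *; exact: a0.
rewrite (reindex_esum A _ (fun x => (k x, x)) (fun z => a z.2)) //.
split.
- by move=> x Ax /=; split => //.
- by move=> x y _ _ [].
- move=> [j x] /= [_ [Ax kx]]; by exists x => //=; rewrite kx.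
Qed.

Lemma rsum_part (T J : choiceType) (A : set T) (k : T -> J) (g : T -> R) :
  (\esum_(x in A) (`|g x|)%:E < +oo)%E ->
  rsum A g = rsum [set: J] (fun j => rsum (A `&` (k @^-1` [set j])) g).
Proof.
move=> fin.
have PN : (\esum_(x in A) (Num.max (g x) 0)%:E + \esum_(x in A) (Num.max (- g x) 0)%:E
   = \esum_(x in A) (`|g x|)%:E)%E.
  rewrite -esumD; try by move=> x _; rewrite lee_fin mx_ge0.
  by apply: eq_esum => x _ /=; rewrite -posneg EFinD.
have P0 : (0 <= \esum_(x in A) (Num.max (g x) 0)%:E)%E.
  by apply: esum_ge0 => x _; rewrite lee_fin mx_ge0.
have N0 : (0 <= \esum_(x in A) (Num.max (- g x) 0)%:E)%E.
  by apply: esum_ge0 => x _; rewrite lee_fin mx_ge0.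
have Pf : (\esum_(x in A) (Num.max (g x) 0)%:E < +oo)%E.
  by rewrite -PN in fin; apply: le_lt_trans fin; rewrite leeDl.
have Nf : (\esum_(x in A) (Num.max (- g x) 0)%:E < +oo)%E.
  by rewrite -PN in fin; apply: le_lt_trans fin; rewrite leeDr.
have fj : forall (h : T -> R), (forall x, 0 <= h x) ->
    (\esum_(x in A) (h x)%:E < +oo)%E ->
    forall j, (fine (\esum_(x in (A `&` (k @^-1` [set j]))) (h x)%:E))%:E = \esum_(x in (A `&` (k @^-1` [set j]))) (h x)%:E.
  move=> h h0 hf j; rewrite fineK // ge0_fin_numE; last by apply: esum_ge0 => x _; rewrite lee_fin.
  by apply: le_lt_trans hf; apply: esum_sub => // x [].
have -> : (fun j => rsum ((A `&` (k @^-1` [set j]))) g) = (fun j => fine (\esum_(x in (A `&` (k @^-1` [set j]))) (Num.max (g x) 0)%:E) - 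
   fine (\esum_(x in (A `&` (k @^-1` [set j]))) (Num.max (- g x) 0)%:E)) by [].
rewrite rsum_lin.
- congr (fine _ - fine _).
  + rewrite (esum_part A k); last by move=> x; rewrite lee_fin mx_ge0.
    by apply: eq_esum => j _; rewrite fj // => x; rewrite mx_ge0.
  + rewrite (esum_part A k); last by move=> x; rewrite lee_fin mx_ge0.
    by apply: eq_esum => j _; rewrite fj // => x; rewrite mx_ge0.
- by move=> j; apply: fine_ge0; apply: esum_ge0 => x _; rewrite lee_fin mx_ge0.
- by move=> j; apply: fine_ge0; apply: esum_ge0 => x _; rewrite lee_fin mx_ge0.
- rewrite (eq_esum (b := fun j => \esum_(x in (A `&` (k @^-1` [set j]))) (Num.max (g x) 0)%:E)).
    by rewrite -esum_part // => x; rewrite lee_fin mx_ge0.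
  by move=> j _; rewrite fj // => x; rewrite mx_ge0.
- rewrite (eq_esum (b := fun j => \esum_(x in (A `&` (k @^-1` [set j]))) (Num.max (- g x) 0)%:E)).
    by rewrite -esum_part // => x; rewrite lee_fin mx_ge0.
  by move=> j _; rewrite fj // => x; rewrite mx_ge0.
Qed.


Lemma cmod_ge0 (z : R[i]) : (0 : R) <= cmod z.
Proof. by case: z => a b; rewrite /cmod /= sqrtr_ge0. Qed.

Lemma cmodD (z u : R[i]) : cmod (z + u) <= cmod z + cmod u :> R.
Proof. exact: (@le_normcD R z u). Qed.

Lemma cmodN (z : R[i]) : cmod (- z) = cmod z.
Proof. exact: (@normcN R z). Qed.

Lemma cmod0 : cmod (0 : R[i]) = 0.
Proof. exact: ComplexField.Normc.normc0. Qed.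

Lemma cmod1 : cmod (1 : R[i]) = 1.
Proof. exact: ComplexField.Normc.normc1. Qed.

Lemma cmodM (z u : R[i]) : cmod (z * u) = cmod z * cmod u.
Proof. exact: ComplexField.Normc.normcM. Qed.

Lemma cmodB (z u : R[i]) : cmod (z - u) <= cmod z + cmod u :> R.
Proof. by rewrite (le_trans (cmodD _ _)) // cmodN. Qed.

Lemma Re_cmod (z : R[i]) : `|complex.Re z| <= cmod z :> R.
Proof.
case: z => a b; rewrite /cmod /= -sqrtr_sqr ler_sqrt ?lerDl ?sqr_ge0 //.
by rewrite addr_ge0 ?sqr_ge0.
Qed.

Lemma Im_cmod (z : R[i]) : `|complex.Im z| <= cmod z :> R.
Proof.
case: z => a b; rewrite /cmod /= -sqrtr_sqr ler_sqrt ?lerDr ?sqr_ge0 //.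
by rewrite addr_ge0 ?sqr_ge0.
Qed.

Lemma cmod_ReIm (a b : R) : cmod (Complex a b) <= `|a| + `|b| :> R.
Proof.
have -> : Complex a b = Complex a 0 + Complex 0 b by apply/eqP; rewrite eq_complex /= addr0 add0r !eqxx.
apply: (le_trans (cmodD _ _)).
by rewrite /cmod /= expr0n /= addr0 add0r !sqrtr_sqr.
Qed.

Lemma csumE (T : choiceType) (A : set T) (f : T -> R[i]) :
  csum A f = Complex (rsum A (fun x => complex.Re (f x))) (rsum A (fun x => complex.Im (f x))).
Proof. by []. Qed.

Lemma csum_agree (T : choiceType) (A B : set T) (f : T -> R[i]) :
  (forall x, f x != 0 -> (A x <-> B x)) -> csum A f = csum B f.
Proof.
move=> h; rewrite !csumE; congr Complex; apply: rsum_agree => x hx; apply: h;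
  by apply: contraNneq hx => ->.
Qed.

Lemma csum_zero (T : choiceType) (A : set T) (f : T -> R[i]) :
  (forall x, A x -> f x = 0) -> csum A f = 0.
Proof.
move=> h; rewrite csumE !rsum_zero // => x /h -> //.
Qed.

Lemma csum_reindex (T T' : choiceType) (P : set T) (Q : set T') (e : T -> T') (f : T' -> R[i]) :
  set_bij P Q e -> csum Q f = csum P (f \o e).
Proof. by move=> h; rewrite !csumE (rsum_reindex _ h) (rsum_reindex (fun x => complex.Im (f x)) h). Qed.

Lemma esum_Re_fin (T : choiceType) (A : set T) (f : T -> R[i]) :
  (\esum_(x in A) (cmod (f x))%:E < +oo)%E ->
  (\esum_(x in A) (`|complex.Re (f x)|)%:E < +oo)%E /\ (\esum_(x in A) (`|complex.Im (f x)|)%:E < +oo)%E.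
Proof.
move=> h; split; apply: le_lt_trans h; apply: le_esum => x _; rewrite lee_fin.
  exact: Re_cmod.
exact: Im_cmod.
Qed.

Lemma csum_part (T J : choiceType) (A : set T) (k : T -> J) (f : T -> R[i]) :
  (\esum_(x in A) (cmod (f x))%:E < +oo)%E ->
  csum A f = csum [set: J] (fun j => csum (A `&` (k @^-1` [set j])) f).
Proof.
move=> /esum_Re_fin [h1 h2]; rewrite !csumE /=.
by rewrite (rsum_part k h1) (rsum_part k h2).
Qed.

Lemma csum_bound (T : choiceType) (A : set T) (f : T -> R[i]) :
  (\esum_(x in A) (cmod (f x))%:E < +oo)%E ->
  ((cmod (csum A f))%:E <= \esum_(x in A) (cmod (f x))%:E + \esum_(x in A) (cmod (f x))%:E)%E.
Proof.
move=> h; have [h1 h2] := esum_Re_fin h.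
rewrite csumE; apply: (@le_trans _ _ ((`|rsum A (fun x => complex.Re (f x))| + `|rsum A (fun x => complex.Im (f x))|)%:E)).
  by rewrite lee_fin; apply: cmod_ReIm.
rewrite EFinD leeD //.
  apply: le_trans (rsum_abs_le h1) _; apply: le_esum => x _; rewrite lee_fin; exact: Re_cmod.
apply: le_trans (rsum_abs_le h2) _; apply: le_esum => x _; rewrite lee_fin; exact: Im_cmod.
Qed.

Lemma rsum_set1 (T : choiceType) (x0 : T) (g : T -> R) : rsum [set x0] g = g x0.
Proof.
rewrite /rsum !esum_set1 ?lee_fin ?mx_ge0 //=.
have [h|h] := leP 0 (g x0).
  by rewrite (@mx_r (- g x0)) ?oppr_le0 // subr0.
by rewrite (@mx_l (- g x0)) ?oppr_ge0 ?(ltW h) // sub0r opprK.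
Qed.

Lemma csum_set1 (T : choiceType) (x0 : T) (f : T -> R[i]) : csum [set x0] f = f x0.
Proof. by rewrite csumE !rsum_set1; case: (f x0). Qed.


Lemma rsum_eq (T : choiceType) (A : set T) (g h : T -> R) :
  (forall x, A x -> g x = h x) -> rsum A g = rsum A h.
Proof.
by move=> e; rewrite /rsum; congr (fine _ - fine _); apply: eq_esum => x /e ->.
Qed.

Lemma csum_eq (T : choiceType) (A : set T) (f g : T -> R[i]) :
  (forall x, A x -> f x = g x) -> csum A f = csum A g.
Proof.
by move=> e; rewrite !csumE; congr Complex; apply: rsum_eq => x /e ->.
Qed.

Lemma inv_bij (T : choiceType) (A : set T) (e : T -> T) :
  (forall x, e (e x) = x) -> (forall x, A x -> A (e x)) -> set_bij A A e.
Proof.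
move=> ee eA; split.
- by move=> x /eA.
- by move=> x y _ _ /(congr1 e); rewrite !ee.
- by move=> x Ax; exists (e x); [exact: eA | exact: ee].
Qed.

Lemma wnorm_ge (T : choiceType) (w : T -> R) (f : T -> R[i]) (u : T) :
  (forall x, 0 <= w x) -> ((cmod (f u) * w u)%:E <= wnorm w f)%E.
Proof.
move=> w0; apply: esum_ge; exists [set u].
  by split; [exact: finite_set1 | move=> x ->].
by rewrite fsbig_set1.
Qed.

End Sums.

Section Band.
Variables (R : realType) (S : choiceType) (mul : S -> S -> S).
Hypothesis hA : forall s t u, mul s (mul t u) = mul (mul s t) u.
Hypothesis hI : forall s, mul s s = s.
Hypothesis hB : forall s t, mul (mul s t) s = s.

Lemma m3 x y z : mul (mul x y) z = mul x z.
Proof.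
rewrite -{2}(hB x (mul y z)) -!hA (hA z x z) hB //.
Qed.

Definition dl (s : S) : S -> R[i] := fun t => if t == s then 1 else 0.

Definition tau (s t x : S) : S := if x == s then t else if x == t then s else x.

Lemma tauK s t x : tau s t (tau s t x) = x.
Proof.
rewrite /tau; case: (boolP (x == s)) => [/eqP ->|xs].
  by case: (boolP (t == s)) => [/eqP ->|ts]; rewrite ?eqxx // (negPf ts) eqxx.
case: (boolP (x == t)) => [/eqP Ext|xt].
  by subst x; rewrite eqxx.
by rewrite (negPf xs) (negPf xt).
Qed.

Lemma dl_tau s t x : dl s (tau s t x) = dl t x.
Proof.
rewrite /dl /tau; case: (boolP (x == s)) => [/eqP ->|xs].
  by case: (boolP (t == s)) => [/eqP Ets|ts]; [subst t; rewrite ?eqxx | rewrite ?eqxx // eq_sym (negPf ts)].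
case: (boolP (x == t)) => [/eqP Ext|xt].
  by subst x; rewrite ?eqxx.
by rewrite ?(negPf xs) ?(negPf xt) ?(negPf xs).
Qed.

Lemma conv_sym s t (g : S -> R[i]) u :
  (forall y, mul s y = mul t y) -> conv mul (dl s) g u = conv mul (dl t) g u.
Proof.
move=> st; rewrite /conv.
have taum : forall x y, mul (tau s t x) y = mul x y.
  move=> x y; rewrite /tau; case: ifPn => [/eqP ->|_]; first by rewrite st.
  by case: ifPn => [/eqP ->|_] //; rewrite st.
rewrite (csum_reindex (e := fun p => (tau s t p.1, p.2))
   (P := [set p | mul p.1 p.2 = u])); last first.
  apply: inv_bij => [[x y]|[x y]] /=; first by rewrite tauK.
  by rewrite taum.
by apply: csum_eq => p _ /=; rewrite dl_tau.
Qed.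

Lemma ract_sym s t (m : S * S -> R[i]) q :
  (forall x, mul x s = mul x t) -> ract mul m (dl s) q = ract mul m (dl t) q.
Proof.
move=> st; rewrite /ract.
have taum : forall x y, mul x (tau s t y) = mul x y.
  move=> x y; rewrite /tau; case: ifPn => [/eqP ->|_]; first by rewrite st.
  by case: ifPn => [/eqP ->|_] //; rewrite st.
rewrite (csum_reindex (e := fun p => (p.1, tau s t p.2))
   (P := [set p | mul p.1 p.2 = q.2])); last first.
  apply: inv_bij => [[x y]|[x y]] /=; first by rewrite tauK.
  by rewrite taum.
by apply: csum_eq => p _ /=; rewrite dl_tau.
Qed.


Lemma dl_sum s (F : S -> R[i]) v :
  csum [set p | mul p.1 p.2 = v] (fun p => dl s p.1 * F p.2) = csum [set t | mul s t = v] F.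
Proof.
rewrite (csum_agree (B := [set p | p.1 = s /\ mul s p.2 = v])); last first.
  move=> [x y] /=; rewrite /dl; have [->|xs] := eqVneq x s; last by rewrite mul0r eqxx.
  by move=> _; split => [->|[]].
rewrite (csum_reindex (e := fun t => (s, t)) (P := [set t | mul s t = v])).
  by apply: csum_eq => t _ /=; rewrite /dl eqxx mul1r.
split.
- by move=> t /= ->.
- by move=> x y _ _ [].
- by move=> [x y] /= [-> <-]; exists y.
Qed.

Lemma lact_eq s (m : S * S -> R[i]) q :
  lact mul (dl s) m q = csum [set t | mul s t = q.1] (fun t => m (t, q.2)).
Proof. exact: (dl_sum s (fun t => m (t, q.2)) q.1). Qed.

Lemma lact_zero s (m : S * S -> R[i]) q : mul s q.1 != q.1 -> lact mul (dl s) m q = 0.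
Proof.
move=> h; rewrite lact_eq; apply: csum_zero => t /= e.
by move: h; rewrite -e hA hI eqxx.
Qed.

Lemma conv_eq s (g : S -> R[i]) u : conv mul (dl s) g u = csum [set t | mul s t = u] g.
Proof. exact: dl_sum. Qed.

Variable w : S -> R.
Hypothesis hw1 : forall s, 1 <= w s.

Lemma tw1 q : 1 <= tweight w q.
Proof. by rewrite /tweight mulr_ege1. Qed.

Lemma summ (mi : S * S -> R[i]) (P : set (S * S)) : inl1 (tweight w) mi ->
  (\esum_(x in P) (cmod (mi x))%:E < +oo)%E.
Proof.
move=> h; apply: le_lt_trans h.
apply: (@le_trans _ _ (\esum_(x in [set: S*S]) (cmod (mi x))%:E)).
  by apply: esum_sub => // x; rewrite lee_fin cmod_ge0.
apply: le_esum => x _; rewrite lee_fin ler_peMr ?cmod_ge0 ?tw1 //.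
Qed.

Definition Wn (s : S) (mi : S * S -> R[i]) :=
  wnorm (tweight w) (fun q => lact mul (dl s) mi q - ract mul mi (dl s) q).

Lemma Lcase s s' (mi : S * S -> R[i]) :
  s != s' -> (forall x, mul x s = mul x s') -> inl1 (tweight w) mi ->
  (Wn s mi + Wn s' mi < +oo)%E ->
  ((cmod (conv mul (dl s) (piS mul mi) s))%:E <= (Wn s mi + Wn s' mi) + (Wn s mi + Wn s' mi))%E.
Proof.
move=> sn hs hm Wfin.
set W1 := Wn s mi. set W2 := Wn s' mi.
set X := lact mul (dl s) mi.
set Y := ract mul mi (dl s).
set Z := lact mul (dl s') mi.
have YZ : ract mul mi (dl s') = Y.
  by apply: funext => q; rewrite /Y (ract_sym mi q hs).
have disj : forall q1, mul s q1 = q1 -> mul s' q1 != q1.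
  move=> q1 e1; apply/negP => /eqP e2; move/negP: sn; apply.
  apply/eqP; rewrite -(hB s q1) -(hB s' q1) e1 e2 hs //.
pose F q := if mul s q.1 == q.1 then cmod (X q) * tweight w q else 0.
have F0 : forall q, 0 <= F q.
  by move=> q; rewrite /F; case: ifP => // _; rewrite mulr_ge0 ?cmod_ge0 // (le_trans ler01 (tw1 q)).
have FW : (\esum_(q in [set: S * S]) (F q)%:E <= W1 + W2)%E.
  rewrite /W1 /W2 /Wn YZ -/X -/Y -/Z /wnorm -esumD; last 2 first.
  - by move=> q _; rewrite lee_fin mulr_ge0 ?cmod_ge0 // (le_trans ler01 (tw1 q)).
  - by move=> q _; rewrite lee_fin mulr_ge0 ?cmod_ge0 // (le_trans ler01 (tw1 q)).
  apply: le_esum => q _; rewrite -EFinD lee_fin /F.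
  case: ifPn => [/eqP e1|_]; last first.
    by rewrite addr_ge0 // mulr_ge0 ?cmod_ge0 // (le_trans ler01 (tw1 q)).
  rewrite -mulrDl ler_wpM2r ?(le_trans ler01 (tw1 q)) //.
  have -> : Z q = 0 by rewrite /Z lact_zero // disj.
  have E : (X q - Y q) - (0 - Y q) = X q by rewrite sub0r opprK subrK.
  by rewrite -{1}E cmodB.
set P := [set p : S * S | mul s p.2 = s].
have c1 : conv mul (dl s) (piS mul mi) s = csum P mi.
  rewrite conv_eq (csum_part (fun p => mul p.1 p.2) (summ P hm)).
  rewrite (csum_agree (B := [set t | mul s t = s])); last first.
    move=> t h; split => // _; apply/eqP; apply: contraNT h => h.
    apply/eqP; apply: csum_zero => p [/= e1 e2]; move: h; rewrite -e2 hA m3 e1 eqxx //.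
  apply: csum_eq => t /= st; rewrite /piS; apply: csum_agree => p _; split.
    by move=> /= e; split => //=; rewrite /P /= -st -e hA m3.
  by move=> [_ /= ->].
rewrite c1 (csum_part (fun p => (mul s p.1, p.2)) (summ P hm)).
set h := fun q => csum _ mi.
have hF : forall q, cmod (h q) <= F q.
  move=> q; rewrite /h /F; case: ifPn => [/eqP e1|n1]; last first.
    rewrite csum_zero ?cmod0 // => p [_ /= e]; move: n1; rewrite -e /= hA hI eqxx //.
  case: (boolP (mul s q.2 == s)) => [/eqP e2|n2]; last first.
    rewrite csum_zero ?cmod0; first by rewrite mulr_ge0 ?cmod_ge0 // (le_trans ler01 (tw1 q)).
    by move=> p [/= e3 e]; move: n2; rewrite -e /= e3 eqxx.
  rewrite (csum_agree (B := [set p | mul s p.1 = q.1 /\ p.2 = q.2])); last first.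
    move=> p _; rewrite /P /=; split => [[e3 e]|[e3 e4]]; first by rewrite -e.
    by split; [rewrite e4 | rewrite e3 e4; case: (q)].
  rewrite (csum_reindex (e := fun t => (t, q.2)) (P := [set t | mul s t = q.1]) (Q := [set p | mul s p.1 = q.1 /\ p.2 = q.2])); last first.
    split.
    - by move=> t /= ->.
    - by move=> x y _ _ [].
    - by move=> [x y] /= [e3 <-]; exists x.
  by rewrite /X lact_eq; apply: ler_peMr; rewrite ?cmod_ge0 ?tw1.
have hfin : (\esum_(q in [set: S * S]) (cmod (h q))%:E < +oo)%E.
  apply: le_lt_trans (_ : (_ <= W1 + W2)%E) _.
    by apply: le_trans FW; apply: le_esum => q _; rewrite lee_fin.
  exact: Wfin.
apply: le_trans (csum_bound hfin) _.
have : (\esum_(q in [set: S * S]) (cmod (h q))%:E <= W1 + W2)%E.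
  by apply: le_trans FW; apply: le_esum => q _; rewrite lee_fin.
by move=> H; rewrite leeD.
Qed.

End Band.

Section Ev.
Variables (I : Type) (le : I -> I -> Prop).
Hypothesis hdir : directed le.
Definition ev (P : I -> Prop) := exists i0, forall i, le i0 i -> P i.

Lemma ev_and P Q : ev P -> ev Q -> ev (fun i => P i /\ Q i).
Proof.
case: hdir => _ [_ [htr hj]] [i1 h1] [i2 h2].
have [k [k1 k2]] := hj i1 i2.
by exists k => i ki; split; [apply: h1; apply: htr ki | apply: h2; apply: htr ki].
Qed.

Lemma ev_ex P : ev P -> exists i, P i.
Proof. by case: hdir => _ [hr _] [i0 h]; exists i0; apply: h. Qed.
End Ev.

Lemma w_ge1 (R : realType) (S : choiceType) (mul : S -> S -> S) (w : S -> R) :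
  separable_weight mul w -> forall s, 1 <= w s.
Proof.
case=> L [Rt [phi [[g c1 c2] [_ [wL [wR [[wL0 wLm] [[wR0 wRm] hw]]]]]]]] s.
rewrite -(c2 s); case: (g s) => l r; rewrite hw mulr_ege1 //.
  by have := wLm l l; rewrite -{1}(mulr1 (wL l)) ler_pM2l.
by have := wRm r r; rewrite -{1}(mulr1 (wR r)) ler_pM2l.
Qed.

Lemma inl1_dl (R : realType) (S : choiceType) (w : S -> R) s :
  (forall x, 0 <= w x) -> inl1 w (dl R s).
Proof.
move=> w0; rewrite /inl1 /wnorm (esumID [set s]); last first.
  by move=> x _; rewrite lee_fin mulr_ge0 ?cmod_ge0.
rewrite setTI esum_set1; last by rewrite lee_fin mulr_ge0 ?cmod_ge0.
rewrite esum1 ?adde0 ?ltry // => x [_ /= xs].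
by rewrite /dl ifN ?cmod0 ?mul0r //; apply/eqP.
Qed.

Lemma pa_singleton (R : realType) (S : choiceType) (mul : S -> S -> S) (w : S -> R)
  (hw : is_weight mul w) (s0 : S) (hs : forall t : S, t = s0) : pseudo_amenable mul w.
Proof.
have eqS : forall x y : S, x = y by move=> x y; rewrite (hs x) (hs y).
have w0 : forall x, 0 <= w x by move=> x; case: hw => h _; exact: ltW.
have setTE : [set: S * S] = [set (s0, s0)].
  by apply/seteqP; split => [[x y] _|[x y] _] //=; rewrite (hs x) (hs y).
have cs : forall (A : set (S * S)) (f : S * S -> R[i]), (forall p, A p) -> csum A f = f (s0, s0).
  move=> A f hA; rewrite (csum_agree (B := [set (s0, s0)])) ?csum_set1 // => [[x y]] _.
  by split=> _ //=; rewrite (hs x) (hs y).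
exists unit, (fun _ _ => True), (fun _ _ => 1).
split; first by split; [constructor; exact: tt | split => //; split => // _ _; exists tt].
split.
  move=> _; rewrite /inl1 /wnorm setTE esum_set1 ?ltry // lee_fin mulr_ge0 ?cmod_ge0 //.
  by rewrite /tweight mulr_ge0.
move=> a _; split=> e e0; exists tt => _ _.
- rewrite /wnorm esum1 ?lte_fin // => q _.
  by rewrite /lact /ract !(cs _ _ (fun p => eqS _ _)) /= mulr1 mul1r subrr cmod0 mul0r.
- rewrite /wnorm esum1 ?lte_fin // => u _.
  by rewrite /conv /piS !(cs _ _ (fun p => eqS _ _)) /= mulr1 (hs u) subrr cmod0 mul0r.
Qed.


Lemma pa_single (R : realType) (S : choiceType) (mul : S -> S -> S) (w : S -> R)
  (hband : rectangular_band mul) (hw : is_weight mul w) (hsep : separable_weight mul w) :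
  pseudo_amenable mul w -> forall s s' : S, s = s'.
Proof.
case: hband => hA [hI hB] [I [le [m [hdir [hm hc]]]]] s s'.
have w1 := w_ge1 hsep.
have w0 : forall x, 0 <= w x by move=> x; case: hw => h _; exact: ltW.
case: (eqVneq s s') => // sn; exfalso.
have one : forall c : R[i], 1 <= cmod c + cmod (c - 1).
  move=> c; rewrite -cmod1; have E : c - (c - 1) = 1 by rewrite opprB addrC subrK.
  by rewrite -{1}E cmodB.
have lw : forall (c : R[i]) (r : R), ((cmod c * w s)%:E < r%:E)%E -> cmod c < r.
  move=> c r; rewrite lte_fin => h; apply: le_lt_trans h.
  by apply: ler_peMr; rewrite ?cmod_ge0 ?w1.
case: (eqVneq (mul s s') s) => [e|ne].
- have hs : forall x, mul x s = mul x s'.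
    by move=> x; rewrite -{1}e hA (m3 hA hB).
  pose ep : R := 1 / 8.
  have ep0 : 0 < ep by rewrite /ep; lra.
  have [N1 N2] := hc _ (inl1_dl s w0).
  have [N1' _] := hc _ (inl1_dl s' w0).
  have [i [[h1 h2] h3]] := ev_ex hdir (ev_and hdir (ev_and hdir (N1 ep ep0) (N1' ep ep0)) (N2 ep ep0)).
  have L := Lcase hA hI hB w1 sn hs (hm i).
  have hW : (Wn mul w s (m i) + Wn mul w s' (m i) < (ep + ep)%:E)%E.
    by rewrite EFinD; apply: lteD.
  have /L {}L := lt_le_trans hW (leey _).
  have c4 : cmod (conv mul (dl R s) (piS mul (m i)) s) < 4 * ep.
    rewrite -lte_fin; apply: le_lt_trans L _.
    have -> : 4 * ep = (ep + ep) + (ep + ep) by lra.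
    by rewrite EFinD; apply: lteD.
  have c1 := lw _ _ (le_lt_trans (wnorm_ge _ s w0) h3).
  rewrite /dl eqxx in c1.
  have := one (conv mul (dl R s) (piS mul (m i)) s).
  rewrite /dl in c4 *. rewrite /ep in c4 c1. lra.
- set t := mul s s' in ne.
  have hst : forall y, mul s y = mul t y by move=> y; rewrite /t (m3 hA hB).
  pose ep : R := 1 / 4.
  have ep0 : 0 < ep by rewrite /ep; lra.
  have [_ N2] := hc _ (inl1_dl s w0).
  have [_ N2'] := hc _ (inl1_dl t w0).
  have [i [h1 h2]] := ev_ex hdir (ev_and hdir (N2 ep ep0) (N2' ep ep0)).
  have c1 := lw _ _ (le_lt_trans (wnorm_ge _ s w0) h1).
  have c2 := lw _ _ (le_lt_trans (wnorm_ge _ s w0) h2).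
  rewrite -(conv_sym _ _ hst) in c2.
  have dts : dl R t s = 0 by rewrite /dl ifN // eq_sym.
  rewrite dts subr0 in c2.
  rewrite /dl eqxx in c1.
  have := one (conv mul (dl R s) (piS mul (m i)) s).
  rewrite /dl in c2 *. rewrite /ep in c1 c2. lra.
Qed.

Unset Implicit Arguments.

Theorem theorem2p7 (R : realType) (S : choiceType) (mul : S -> S -> S) (w : S -> R)
  (hS : inhabited S) (hband : rectangular_band mul)
  (hw : is_weight mul w) (hsep : separable_weight mul w) :
  pseudo_amenable mul w <-> exists s0 : S, forall t : S, t = s0.
Proof.
split.
  move=> pa; case: hS => s0; exists s0 => t.
  exact: (pa_single hband hw hsep pa).
by case=> s0 hs; exact: (pa_singleton hw hs).
Qed.
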